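(* Let $X$ be a first-countable topological space with $X=X_1\sqcup X_2$ (disjoint union), and assume that for every convergent sequence $\bar x=\{x_j\}_{j\in\mathbb{N}}$ contained in $X_1$, the set $L(\bar x)\cap X_2$ has no isolated points, where $L(\bar x)$ is the set of limits of $\bar x$. Then for every subset $S\subseteq X$ that is locally closed (i.e., the intersection of an open and a closed subset of $X$) and Hausdorff in its relative topology, the set $S\cap X_1$ is relatively closed in $S$.
   Context: For a sequence $\bar x=\{x_j\}_{j\in\mathbb{N}}$ in a (not necessarily Hausdorff) topological space, $L(\bar x)$ denotes the set of all points to which the sequence converges. *)

(* Defs.v *)
From HB Require Import structures.
From mathcomp Require Import all_boot all_order all_algebra.
From mathcomp Require Import all_classical all_reals all_analysis.
Set Implicit Arguments. Unset Strict Implicit. Unset Printing Implicit Defensive.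
Local Open Scope classical_set_scope.

Definition first_countable (T : topologicalType) : Prop :=
  forall x : T, exists B : nat -> set T,
    (forall n, nbhs x (B n)) /\ (forall U, nbhs x U -> exists n, B n `<=` U).

Definition seq_limits (T : topologicalType) (u : nat -> T) : set T :=
  [set p | u @ \oo --> p].

Definition locally_closed (T : topologicalType) (S : set T) : Prop :=
  exists U C : set T, open U /\ closed C /\ S = U `&` C.

Definition rel_closed_in (T : topologicalType) (S A : set T) : Prop :=
  exists C : set T, closed C /\ A = S `&` C.

(* Main.v *)
Require Import Defs.
From HB Require Import structures.
From mathcomp Require Import all_boot all_order all_algebra.
From mathcomp Require Import all_classical all_reals all_analysis.
Local Open Scope classical_set_scope.

Lemma sub_cvg (X : topologicalType) (S : set X) (u : nat -> X) (p : X) :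
  (forall j, S (u j)) -> S p -> u @ \oo --> p ->
  (u : nat -> subspace S) @ \oo --> (p : subspace S).
Proof.
move=> Su Sp up; apply/(@subspace_cvgP _ S (u @ \oo) p _ Sp).
move=> W /= hW; have := up _ hW; rewrite /= /nbhs /=.
by apply: filterS => j /=; apply; apply: Su.
Qed.

Theorem lemma3p1 (X : topologicalType) (X1 X2 : set X) :
  first_countable X ->
  X1 `&` X2 = set0 -> X1 `|` X2 = setT ->
  (forall u : nat -> X, (forall j, X1 (u j)) -> (exists p : X, u @ \oo --> p) ->
     forall p : X, ~ isolated (seq_limits u `&` X2) p) ->
  forall S : set X, locally_closed S -> hausdorff_space (subspace S) ->
    rel_closed_in S (S `&` X1).
Proof.
move=> fc hdisj hcov hyp S [U [C [oU [cC SE]]]] hS.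
exists (closure (S `&` X1)); split; first exact: closed_closure.
apply/seteqP; split.
  move=> x [Sx X1x]; split=> //; exact: subset_closure.
move=> x [Sx clx]; split=> //.
apply: contrapT => nX1x.
have X2x : X2 x.
  have : (X1 `|` X2) x by rewrite hcov.
  by case.
have [B [Bn Bb]] := fc x.
pose V n := [set y | forall k, (k <= n)%N -> B k y].
have nV : forall n, nbhs x (V n).
  elim=> [|n IH].
    by apply: filterS (Bn 0%N) => y By k; rewrite leqn0 => /eqP ->.
  apply: filterS (filterI IH (Bn n.+1)) => y [Vy By] k.
  by rewrite leq_eqVlt => /orP [/eqP ->|]; [|apply: Vy].
have /choice [u hu] : forall n, exists y, (S `&` X1) y /\ V n y.
  move=> n; have [y [Hy Vy]] := clx _ (nV n); by exists y.
have Su : forall j, S (u j) by move=> j; case: (hu j) => [[]].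
have X1u : forall j, X1 (u j) by move=> j; case: (hu j) => [[]].
have ux : u @ \oo --> x.
  move=> W /= hW; have [n Bn'] := Bb _ hW.
  exists n => // j /= hj; apply: Bn'; case: (hu j) => _; apply; exact: hj.
apply: (hyp u X1u (ex_intro _ x ux) x).
split; first by rewrite inE.
have Ux : U x by move: Sx; rewrite SE => -[].
exists U; first by apply: open_nbhs_nbhs; split.
apply/seteqP; split; last by move=> y ->; split.
move=> y [Uy [uy X2y]].
have Cy : C y.
  apply: (closed_cvg _ cC _ _ uy).
  by apply: nearW => j; move: (Su j); rewrite SE => -[].
have Sy : S y by rewrite SE.
have E := (@cvg_unique (subspace S) hS (u @ \oo) _ y x (@sub_cvg _ S u y Su Sy uy) (@sub_cvg _ S u x Su Sx ux)).
exact: E.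

Qed.
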